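(* Let $X,Y$ be $n\times n$ positive semidefinite complex matrices and let $Q$ be an $n\times n$ complex matrix with operator norm $\|Q\|_\infty\le 1$. Then for every $t\in(0,\infty)$, \[ 4\,|\operatorname{tr}(QXY)|\le t\,\operatorname{tr}(X^2+Y^2)+\frac{1}{t}\operatorname{tr}(XY+YX). \]
   Context: $\|Q\|_\infty$ denotes the operator (spectral) norm, i.e. the largest singular value of $Q$; $\operatorname{tr}$ denotes the trace. *)

(* Defs.v *)
(* Complex numbers: any numClosedFieldType C (e.g. algC, or
   complex R for R : rcfType); conjugation is conjC (z^* ). *)
From HB Require Import structures.
From mathcomp Require Import all_boot all_order all_algebra.
Set Implicit Arguments. Unset Strict Implicit. Unset Printing Implicit Defensive.
Import Order.TTheory GRing.Theory Num.Theory.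
Local Open Scope ring_scope.

Section Defs.
Variable C : numClosedFieldType.

Definition adjmx (m n : nat) (A : 'M[C]_(m, n)) : 'M[C]_(n, m) :=
  (map_mx Num.conj A)^T.

Definition psdmx (n : nat) (A : 'M[C]_n) : Prop :=
  adjmx A = A /\ forall v : 'cV[C]_n, 0 <= (adjmx v *m A *m v) 0 0.

Definition sqnorm (n : nat) (v : 'cV[C]_n) : C :=
  \sum_(i < n) `|v i 0| ^+ 2.

Definition opnorm_le1 (n : nat) (Q : 'M[C]_n) : Prop :=
  forall v : 'cV[C]_n, sqnorm (Q *m v) <= sqnorm v.
End Defs.

(* Main.v *)
Require Import Defs.
From HB Require Import structures.
From mathcomp Require Import all_boot all_order all_algebra.
From mathcomp Require Import sesquilinear spectral ring.
Import Order.TTheory GRing.Theory Num.Theory Num.Def.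
Local Open Scope ring_scope.
Section S.
Context {C : numClosedFieldType}.

Lemma adjE m n (A : 'M[C]_(m,n)) : adjmx A = (A ^t*)%sesqui.
Proof. by rewrite /adjmx map_trmx. Qed.

Lemma adjK m n (A : 'M[C]_(m,n)) : adjmx (adjmx A) = A.
Proof. by rewrite !adjE trmxCK. Qed.

Lemma adjM m n p (A : 'M[C]_(m,n)) (B : 'M[C]_(n,p)) :
  adjmx (A *m B) = adjmx B *m adjmx A.
Proof. by rewrite /adjmx map_mxM trmx_mul. Qed.

Definition hs m n (A B : 'M[C]_(m,n)) := \tr (A *m adjmx B).
Arguments hs {m n}.

Lemma hsE m n (A B : 'M[C]_(m,n)) :
  hs A B = \sum_i \sum_j A i j * (B i j)^*.
Proof.
rewrite /hs /mxtrace; apply: eq_bigr => i _; rewrite mxE.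
by apply: eq_bigr => j _; rewrite !mxE.
Qed.

Lemma hs_dot m n (A B : 'M[C]_(m,n)) : hs A B = dotmx (mxvec A) (mxvec B).
Proof.
rewrite hsE dotmxE mxE.
have bij : {on [pred i | predT i], bijective (fun p : 'I_m * 'I_n => mxvec_index p.1 p.2)}.
  case: (curry_mxvec_bij m n) => g h1 h2; exists g.
    by move=> [i j] _; exact: (h1 (i, j) isT).
  by move=> k _; have := h2 k isT; case: (g k).
rewrite (reindex _ bij) /=.
rewrite pair_big /=; apply: eq_bigr => [[i j]] _ /=.
by rewrite !mxE !mxvecE.
Qed.

Lemma hs_ge0 m n (A : 'M[C]_(m,n)) : 0 <= hs A A.
Proof. by rewrite hs_dot dnorm_ge0. Qed.

Lemma hs_CS m n (A B : 'M[C]_(m,n)) : `|hs A B| ^+ 2 <= hs A A * hs B B.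
Proof. by rewrite !hs_dot; exact: (CauchySchwarz _ _ _).1. Qed.
Arguments hs_ge0 {m n}.
Arguments hs_CS {m n}.


Lemma psd_factor n (X : 'M[C]_n) : psdmx X -> exists A : 'M[C]_n, X = adjmx A *m A.
Proof.
case=> hXa hXp.
have nX : X \is normalmx by apply/normalmxP; rewrite -adjE hXa.
have /orthomx_spectralP eX := nX.
have uP := spectral_unitarymx X.
move: eX uP; set P := spectralmx X; set d := spectral_diag X => eX uP.
rewrite invmx_unitary // -adjE in eX.
have PP : P *m adjmx P = 1%:M by rewrite adjE; apply/unitarymxP.
have d0 : forall i, 0 <= d 0 i.
  move=> i; have := hXp (adjmx (row i P)); rewrite adjK.
  have -> : d 0 i = (P *m X *m adjmx P) i i.
    by rewrite eX !mulmxA PP mul1mx -mulmxA PP mulmx1 mxE eqxx mulr1n.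
  have -> : (P *m X *m adjmx P) i i = (row i P *m X *m adjmx (row i P)) 0 0.
    rewrite !mxE; apply: eq_bigr => k _; rewrite -row_mul !mxE.
    by [].
  by [].
exists (diag_mx (map_mx sqrtC d) *m P).
rewrite adjM.
have -> : adjmx (diag_mx (map_mx sqrtC d)) = diag_mx (map_mx sqrtC d).
  rewrite adjE tr_diag_mx map_diag_mx; congr diag_mx.
  by apply/matrixP => i j; rewrite !mxE [i]ord1; apply: geC0_conj; rewrite sqrtC_ge0.
rewrite mulmxA -(mulmxA (adjmx P)) mulmx_diag.
rewrite {1}eX; congr (_ *m _ *m _); congr diag_mx.
by apply/rowP => j; rewrite !mxE -expr2 sqrtCK.
Qed.

Lemma hs_col m n (A : 'M[C]_(m,n)) : hs A A = \sum_j sqnorm (col j A).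
Proof.
rewrite hsE exchange_big; apply: eq_bigr => j _; rewrite /sqnorm.
by apply: eq_bigr => i _; rewrite !mxE normCK.
Qed.

Lemma sqnorm_hs n (v : 'cV[C]_n) : sqnorm v = hs v v.
Proof.
rewrite hsE /sqnorm; apply: eq_bigr => i _.
by rewrite big_ord1 normCK.
Qed.

Lemma hs_adj m n (A : 'M[C]_(m,n)) : hs (adjmx A) (adjmx A) = hs A A.
Proof.
rewrite !hsE exchange_big; apply: eq_bigr => j _; apply: eq_bigr => i _.
by rewrite !mxE conjCK mulrC.
Qed.

Lemma contr n m (Q : 'M[C]_n) (A : 'M[C]_(n,m)) :
  opnorm_le1 Q -> hs (Q *m A) (Q *m A) <= hs A A.
Proof.
move=> hQ; rewrite !hs_col; apply: ler_sum => j _; rewrite [col j (_ *m _)]colE -mulmxA -colE; exact: hQ.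
Qed.

Lemma adj_contr n (Q : 'M[C]_n) : opnorm_le1 Q -> opnorm_le1 (adjmx Q).
Proof.
move=> hQ v; set w := adjmx Q *m v.
have e : hs w w = hs v (Q *m w).
  by rewrite /hs adjM mulmxA [RHS]mxtrace_mulC mulmxA.
have cs := hs_CS v (Q *m w); rewrite -e in cs.
have s0 := hs_ge0 w.
have hw : hs (Q *m w) (Q *m w) <= hs w w by rewrite -!sqnorm_hs; exact: hQ.
have cs2 : hs w w * hs w w <= hs v v * hs w w.
  apply: le_trans (ler_wpM2l (hs_ge0 v) hw).
  by rewrite -expr2 -[X in X ^+ 2 <= _](ger0_norm s0).
rewrite !sqnorm_hs.
have [z|nz] := eqVneq (hs w w) 0; first by rewrite z hs_ge0.
have sp : 0 < hs w w by rewrite lt_def nz s0.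
by rewrite -(ler_pM2r sp).
Qed.

End S.
Arguments hs {C m n}.
Arguments hs_ge0 {C m n}.
Arguments hs_CS {C m n}.
Arguments contr {C n m Q} A.
Arguments adj_contr {C n Q}.
Arguments hs_adj {C m n}.
Lemma scalar0 (C : numClosedFieldType) (T m c s t : C) :
  0 <= T -> 0 <= c -> 0 <= m -> 0 <= s -> 0 < t ->
  T ^+ 2 <= m * c -> 2 * m <= s ->
  4 * T <= t * s + t^-1 * (c + c).
Proof.
move=> T0 c0 m0 s0 t0 hT h2.
have ti : 0 < t^-1 by rewrite invr_gt0.
have R0 : 0 <= t * s + t^-1 * (c + c).
  by apply: addr_ge0; apply: mulr_ge0; rewrite ?addr_ge0 // ltW.
have tt : t * t^-1 = 1 by rewrite mulfV ?lt0r_neq0.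
have eR : (t * s + t^-1 * (c + c)) ^+ 2 = (t * s - t^-1 * (c + c)) ^+ 2 + 8 * (s * c) * (t * t^-1).
  by ring.
rewrite -ler_sqr ?nnegrE ?mulr_ge0 ?ler0n // eR tt mulr1.
rewrite -[X in X <= _]add0r; apply: lerD.
  by rewrite -realEsqr realB // realM ?realD ?ger0_real // ?ltW.
have e16 : (4 * T) ^+ 2 = 8 * (2 * T ^+ 2) by ring.
rewrite e16 ler_pM2l ?ltr0n // mulrC.
apply: (@le_trans _ _ (m * c * 2)).
  by rewrite ler_pM2r // ltr0n.
by rewrite mulrAC [m * 2]mulrC ler_wpM2r.
Qed.
Lemma scalar1 (C : numClosedFieldType) (m p q a b : C) :
  0 <= m -> 0 <= p -> 0 <= q ->
  m ^+ 2 <= p * q -> p <= b -> q <= a -> 2 * m <= a + b.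
Proof.
move=> m0 p0 q0 hm hp hq.
have b0 : 0 <= b by apply: le_trans hp.
have a0 : 0 <= a by apply: le_trans hq.
have h1 : (2 * m) ^+ 2 <= (a + b) ^+ 2.
  have -> : (a + b) ^+ 2 = (a - b) ^+ 2 + 4 * (a * b) by ring.
  have -> : (2 * m) ^+ 2 = 0 + 4 * m ^+ 2 by ring.
  apply: lerD.
    by rewrite -realEsqr realB // ger0_real.
  rewrite ler_pM2l ?ltr0n //; apply: (le_trans hm).
  by rewrite mulrC; apply: ler_pM.
by rewrite -ler_sqr ?nnegrE ?addr_ge0 ?mulr_ge0 ?ler0n.
Qed.

Theorem lemma2 (C : numClosedFieldType) (n : nat) (X Y Q : 'M[C]_n)
  (hX : psdmx X) (hY : psdmx Y) (hQ : opnorm_le1 Q) (t : C) (ht : 0 < t) :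
  4 * `|\tr (Q *m X *m Y)|
    <= t * \tr (X *m X + Y *m Y) + t^-1 * \tr (X *m Y + Y *m X).
Proof.
have [A eX] := @psd_factor C n X hX.
have [B eY] := @psd_factor C n Y hY.
have hXa := hX.1; have hYa := hY.1.
set N := B *m adjmx A.
set M := B *m Q *m adjmx A.
have eT : \tr (Q *m X *m Y) = hs M N.
  by rewrite /hs /M /N adjM adjK eX eY !mulmxA mxtrace_mulC !mulmxA.
have eN : hs N N = \tr (X *m Y).
  by rewrite /hs /N adjM adjK eX eY !mulmxA [RHS]mxtrace_mulC !mulmxA.
set U := adjmx Q *m Y.
set V := X *m adjmx Q.
have eM : hs M M = hs U V.
  rewrite /hs /M /U /V !adjM adjK hXa eX eY !mulmxA.
  by rewrite [LHS]mxtrace_mulC !mulmxA [LHS]mxtrace_mulC !mulmxA adjK.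
have hT := hs_CS M N; rewrite -eT in hT.
have hm := hs_CS U V; rewrite -eM ger0_norm ?hs_ge0 in hm.
have hp : hs U U <= hs Y Y := contr Y (adj_contr hQ).
have hq : hs V V <= hs X X.
  by rewrite -hs_adj /V adjM adjK hXa; apply: contr.
have eXX : hs X X = \tr (X *m X) by rewrite /hs hXa.
have eYY : hs Y Y = \tr (Y *m Y) by rewrite /hs hYa.
rewrite !mxtraceD [\tr (Y *m X)]mxtrace_mulC -eXX -eYY -eN.
apply: (@scalar0 C _ (hs M M)) => //; rewrite ?hs_ge0 ?addr_ge0 ?hs_ge0 //.
- apply: (scalar1 _ _ _ _ _ _ _ _ _ hm hp hq); exact: hs_ge0.
- by [].
Qed.
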